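(* Let $n\in\mathbb{N}$ be even and let $(\mathcal{A},\mathcal{B},\mathcal{C})$ be a triple of adversaries for the BB84 monogamy-of-entanglement game with identical basis with parameter $n$ that wins with probability $p_n$. Then there exist a quantum state $\rho_{012}$ and a pair of adversaries for the extended non-local game with parameter $n$ that win with the same probability $p_n$.
   Context: Let $\Theta_n=\{\theta\in\{0,1\}^n: |\theta|=n/2\}$ and $|x^\theta\rangle=\bigotimes_i H^{\theta_i}|x_i\rangle$. For $\theta\in\Theta_n$, $b\in\{0,1\}$ and $x\in\{0,1\}^n$ let $x_{T_b}=(x_i)_{i:\theta_i=b}$. BB84 game with identical basis, parameter $n$: the challenger samples uniform $x\in\{0,1\}^n$, $\theta\in\Theta_n$, sends $|x^\theta\rangle$ to $\mathcal{A}$; $\mathcal{A}$ sends the two parts of a bipartite state $\sigma_{12}$ to $\mathcal{B}$ and $\mathcal{C}$ (who then cannot communicate); the challenger samples a uniform bit $b$ and sends $(\theta,b)$ to both; $\mathcal{B},\mathcal{C}$ output $x_1,x_2$; they win if $x_1=x_2=x_{T_b}$. Extended non-local game, parameter $n$, between a challenger and two players $\mathcal{B}',\mathcal{C}'$: the players jointly prepare a state $\rho_{012}$ where $\rho_0$ is an $n$-qubit register, send register $0$ to the challenger, and keep registers $1$ and $2$ respectively; from then on they cannot communicate. The challenger samples uniform $\theta\in\Theta_n$ and $b\in\{0,1\}$, measures the $i$-th qubit of register $0$ in the computational basis if $\theta_i=0$ and in the Hadamard basis if $\theta_i=1$, obtaining $m\in\{0,1\}^n$, and sends $(\theta,b)$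 to both players. The players output $m_1,m_2$ and win if $m_1=m_2=m_{T_b}$. *)

(* Defs.v *)
From HB Require Import structures.
From mathcomp Require Import all_boot all_order all_algebra.
Set Implicit Arguments. Unset Strict Implicit. Unset Printing Implicit Defensive.
Import Order.TTheory GRing.Theory Num.Theory.
Local Open Scope ring_scope.

Section Quantum.
Variable C : numClosedFieldType.

Definition op (T : finType) := T -> T -> C.

Definition trace (T : finType) (A : op T) : C := \sum_(i : T) A i i.

Definition mulop (T : finType) (A B : op T) : op T :=
  fun i j => \sum_(k : T) A i k * B k j.

Definition idop (T : finType) : op T := fun i j => (i == j)%:R.

Definition psd (T : finType) (A : op T) : Prop :=
  forall v : T -> C, 0 <= \sum_(i : T) \sum_(j : T) (v i)^* * A i j * v j.

Definition is_state (T : finType) (rho : op T) : Prop := psd rho /\ trace rho = 1.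

Definition is_povm (T O : finType) (M : O -> op T) : Prop :=
  (forall o, psd (M o)) /\ (forall i j, \sum_(o : O) M o i j = idop i j).

Definition tens (T1 T2 : finType) (A : op T1) (B : op T2) : op (T1 * T2)%type :=
  fun p q => A p.1 q.1 * B p.2 q.2.

(* linear superoperator from op X to op Y, given by its coefficients *)
Definition superop (X Y : finType) := Y -> Y -> X -> X -> C.

Definition apply_sop (X Y : finType) (Phi : superop X Y) (rho : op X) : op Y :=
  fun y y' => \sum_(x : X) \sum_(x' : X) Phi y y' x x' * rho x x'.

Definition id_tens_sop (E X Y : finType) (Phi : superop X Y) (rho : op (E * X)%type)
  : op (E * Y)%type :=
  fun p q => \sum_(x : X) \sum_(x' : X) Phi p.2 q.2 x x' * rho (p.1, x) (q.1, x').

Definition is_channel (X Y : finType) (Phi : superop X Y) : Prop :=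
  (forall (E : finType) (rho : op (E * X)%type), psd rho -> psd (id_tens_sop Phi rho))
  /\ (forall x x', \sum_(y : Y) Phi y y x x' = idop x x').

Definition proj (T : finType) (psi : T -> C) : op T := fun y y' => psi y * (psi y')^*.

(* n-bit strings = computational basis of n qubits *)
Definition bits (n : nat) := {ffun 'I_n -> bool}.

Definition had (a b : bool) : C := (if a && b then -1 else 1) / sqrtC 2.

(* |x^theta> = (x)_i H^{theta_i} |x_i> as a vector in the computational basis *)
Definition ket (n : nat) (theta x : bits n) : bits n -> C :=
  fun y => \prod_(i < n) (if theta i then had (y i) (x i) else (y i == x i)%:R).

Definition Theta (n : nat) : {set bits n} := [set th : bits n | #|[set i | th i]| == n./2].

(* x_{T_b} : the bits x_i with theta_i = b, in increasing order of i *)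
Definition subs (n : nat) (theta : bits n) (b : bool) (x : bits n) : seq bool :=
  map (fun i => x i) [seq i <- enum 'I_n | theta i == b].

Definition guess (n : nat) := (n./2).-tuple bool.

Definition bb84_win (n : nat) (T1 T2 : finType) (Phi : superop (bits n) (T1 * T2)%type)
  (B : bits n -> bool -> guess n -> op T1) (Cm : bits n -> bool -> guess n -> op T2) : C :=
  \sum_(x : bits n) \sum_(th in Theta n) \sum_(b : bool)
    ((2 ^ n)%:R^-1 * (#|Theta n|%:R)^-1 * 2^-1) *
    \sum_(g : guess n) (val g == subs th b x)%:R *
      trace (mulop (tens (B th b g) (Cm th b g)) (apply_sop Phi (proj (ket th x)))).

Definition ext_win (n : nat) (S1 S2 : finType) (rho : op (bits n * (S1 * S2))%type)
  (B : bits n -> bool -> guess n -> op S1) (Cm : bits n -> bool -> guess n -> op S2) : C :=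
  \sum_(th in Theta n) \sum_(b : bool)
    ((#|Theta n|%:R)^-1 * 2^-1) *
    \sum_(m : bits n) \sum_(g : guess n) (val g == subs th b m)%:R *
      trace (mulop (tens (proj (ket th m)) (tens (B th b g) (Cm th b g))) rho).

End Quantum.

(* Main.v *)
Require Import Defs.
From mathcomp Require Import all_boot all_order all_algebra.
From mathcomp Require Import ring.
Import GRing.Theory Num.Theory.
Local Open Scope ring_scope.

Lemma sum_delta (C : numClosedFieldType) (T : finType) (a : T) (F : T -> C) :
  \sum_x F x * (a == x)%:R = F a.
Proof.
rewrite (bigD1 a) //= eqxx mulr1 big1 ?addr0 // => x /negbTE.
by rewrite eq_sym => ->; rewrite mulr0.
Qed.

Lemma ket_real (C : numClosedFieldType) n (th x y : bits n) :
  (ket C th x y)^* = ket C th x y.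
Proof.
apply: conj_Creal; rewrite /ket; apply: rpred_prod => i _.
case: (th i); last exact: rpred_nat.
rewrite /had; apply: rpredM; first by case: (_ && _); rewrite ?rpredN rpred1.
by rewrite rpredV; apply: sqrtC_real; rewrite ler0n.
Qed.

Lemma psd_proj (C : numClosedFieldType) (T : finType) (psi : T -> C) : psd (proj psi).
Proof.
move=> v; rewrite /proj.
have -> : \sum_i \sum_j (v i)^* * (psi i * (psi j)^*) * v j =
  (\sum_i (v i)^* * psi i) * (\sum_i (v i)^* * psi i)^*.
  rewrite mulr_suml; apply: eq_bigr => i _.
  rewrite rmorph_sum mulr_sumr; apply: eq_bigr => j _.
  rewrite rmorphM /= conjCK; ring.
exact: mul_conjC_ge0.
Qed.

Lemma psd_scale (C : numClosedFieldType) (T : finType) (c : C) (A : op C T) :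
  0 <= c -> psd A -> psd (fun p q => c * A p q).
Proof.
move=> c0 hA v.
have -> : \sum_i \sum_j (v i)^* * (c * A i j) * v j =
   c * \sum_i \sum_j (v i)^* * A i j * v j.
  rewrite mulr_sumr; apply: eq_bigr => i _; rewrite mulr_sumr.
  by apply: eq_bigr => j _; ring.
exact: mulr_ge0.
Qed.

Theorem mainTheorem3 (C : numClosedFieldType) (n : nat) (T1 T2 : finType)
  (Phi : superop C (bits n) (T1 * T2)%type)
  (B : bits n -> bool -> guess n -> op C T1)
  (Cm : bits n -> bool -> guess n -> op C T2) (p : C) :
  ~~ odd n ->
  is_channel Phi ->
  (forall th b, is_povm (B th b)) ->
  (forall th b, is_povm (Cm th b)) ->
  bb84_win Phi B Cm = p ->
  exists (S1 S2 : finType) (rho : op C (bits n * (S1 * S2))%type)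
         (B' : bits n -> bool -> guess n -> op C S1)
         (C' : bits n -> bool -> guess n -> op C S2),
    [/\ is_state rho, (forall th b, is_povm (B' th b)),
        (forall th b, is_povm (C' th b)) & ext_win rho B' C' = p].
Proof.
move=> _ [hCP hTP] hB hC <-.
pose psi : bits n * bits n -> C := fun q => (q.1 == q.2)%:R.
pose d : C := ((2 ^ n)%:R)^-1.
pose rho := fun p q => d * id_tens_sop Phi (proj psi) p q.
have rhoE : forall a s a' s', rho (a, s) (a', s') = d * Phi s s' a a'.
  move=> a s a' s'; rewrite /rho /id_tens_sop /proj /psi /=; congr (_ * _).
  have /= <- := @sum_delta C _ a (fun x => Phi s s' x a').
  apply: eq_bigr => x _.
  have /= <- := @sum_delta C _ a' (fun x' => Phi s s' x x').
  rewrite mulr_suml.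
  apply: eq_bigr => x' _; rewrite conjC_nat; ring.
have d0 : (2 ^ n)%:R != 0 :> C by rewrite pnatr_eq0 expn_eq0.
exists T1, T2, rho, B, Cm; split => //.
- split.
    apply: psd_scale; first by rewrite invr_ge0 ler0n.
    by apply: hCP; apply: psd_proj.
  rewrite /trace.
  transitivity (\sum_(a : bits n) \sum_(s : T1 * T2) rho (a, s) (a, s)).
    by rewrite pair_bigA; apply: eq_bigr => -[].
  transitivity (\sum_(a : bits n) d).
    apply: eq_bigr => a _.
    under eq_bigr => s _ do rewrite rhoE.
    by rewrite -mulr_sumr hTP /idop eqxx mulr1.
  by rewrite sumr_const card_ffun card_ord card_bool -mulr_natr mulVf.
have key : forall (k : bits n -> C) (M : op C (T1 * T2)%type),
    (forall y, (k y)^* = k y) ->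
    trace (mulop (tens (proj k) M) rho) =
    d * trace (mulop M (apply_sop Phi (proj k))).
  move=> k M hk; rewrite /trace /mulop /tens /proj /apply_sop.
  transitivity (\sum_(a : bits n) \sum_(s : T1 * T2) \sum_(a' : bits n)
     \sum_(s' : T1 * T2) k a * (k a')^* * M s s' * rho (a', s') (a, s)).
    rewrite [RHS]pair_bigA; apply: eq_bigr => -[a s] _ /=.
    by rewrite [RHS]pair_bigA; apply: eq_bigr => -[a' s'] _ /=.
  under eq_bigr => a _ do under eq_bigr => s _ do under eq_bigr => a' _ do
    under eq_bigr => s' _ do rewrite rhoE.
  rewrite [LHS]exchange_big /= mulr_sumr; apply: eq_bigr => s _.
  under eq_bigr => a _ do rewrite exchange_big /=.
  rewrite [LHS]exchange_big /= mulr_sumr; apply: eq_bigr => s' _.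
  rewrite [LHS]exchange_big /= mulr_sumr mulr_sumr; apply: eq_bigr => x _.
  rewrite mulr_sumr mulr_sumr; apply: eq_bigr => x' _.
  rewrite !hk; ring.
rewrite /ext_win /bb84_win.
rewrite [RHS]exchange_big /=; apply: eq_bigr => th _.
rewrite [RHS]exchange_big /=; apply: eq_bigr => b _.
rewrite mulr_sumr; apply: eq_bigr => m _.
rewrite !mulr_sumr; apply: eq_bigr => g _.
rewrite key; last exact: ket_real.
rewrite /d; ring.
Qed.
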